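(* There exists a (necessarily discontinuous) map $f:[0,1]\to[0,1]$ such that the chain components poset $(\mathfrak{C}_f,\preceq)$ is order isomorphic to $([0,1]\cap\mathbb{Q},\le)$.
   Context: No regularity is assumed on maps. For a map $f:[0,1]\to[0,1]$ with the usual metric: an $\varepsilon$-chain from $x$ to $y$ is a finite sequence $x_0=x,\dots,x_n=y$, $n\ge1$, with $|f(x_i)-x_{i+1}|<\varepsilon$; $x\,\mathcal{C}\,y$ iff for every $\varepsilon>0$ there is an $\varepsilon$-chain from $x$ to $y$; $CR_f=\{x:x\,\mathcal{C}\,x\}$; $x\,E\,y$ iff $x\,\mathcal{C}\,y$ and $y\,\mathcal{C}\,x$; $\mathfrak{C}_f=CR_f/E$ is the set of chain components, partially ordered by $[x]\preceq[y]$ iff $y\,\mathcal{C}\,x$. *)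

(* Defs.v *)
From Stdlib Require Import Reals.
From mathcomp Require Import all_boot all_order all_algebra.

Local Open Scope R_scope.

Definition I01 (x : R) : Prop := 0 <= x <= 1.

Definition self_map01 (f : R -> R) : Prop := forall x, I01 x -> I01 (f x).

Definition eps_chain (f : R -> R) (eps x y : R) : Prop :=
  exists (n : nat) (s : nat -> R),
    (1 <= n)%nat /\ s 0%nat = x /\ s n = y /\
    (forall i, (i <= n)%nat -> I01 (s i)) /\
    (forall i, (i < n)%nat -> Rabs (f (s i) - s (S i)) < eps).

Definition chain_rel (f : R -> R) (x y : R) : Prop :=
  I01 x /\ I01 y /\ forall eps, 0 < eps -> eps_chain f eps x y.

Definition CR (f : R -> R) (x : R) : Prop := chain_rel f x x.

Definition chainE (f : R -> R) (x y : R) : Prop := chain_rel f x y /\ chain_rel f y x.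

(* The poset of chain components (CR_f / E, with [x] <= [y] iff y C x) is order
   isomorphic to ([0,1] ∩ Q, <=): there is g : CR_f -> [0,1] ∩ Q that is
   constant exactly on E-classes (so it induces a bijection on CR_f / E),
   onto [0,1] ∩ Q, and satisfies [x] <= [y] <-> g x <= g y. *)
Definition chain_components_iso_Q01 (f : R -> R) : Prop :=
  exists g : R -> rat,
    (forall x, CR f x -> (0 <= g x)%R /\ (g x <= 1)%R) /\
    (forall x y, CR f x -> CR f y -> (chainE f x y <-> g x = g y)) /\
    (forall q : rat, (0 <= q)%R -> (q <= 1)%R -> exists x, CR f x /\ g x = q) /\
    (forall x y, CR f x -> CR f y -> (chain_rel f y x <-> (g x <= g y)%R)).

(* Main.v *)
Require Import Defs.
From Stdlib Require Import Reals.
From mathcomp Require Import all_boot all_order all_algebra.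
From mathcomp Require Import all_boot all_order all_algebra.
From Stdlib Require Import Reals Lra ClassicalEpsilon Classical.
From Coquelicot Require Import Coquelicot.
Open Scope R_scope.
Import Order.TTheory.

Definition w (m : nat) : R := (1/2) ^ (S m).

Definition ind (m : nat) (x : rat) : R :=
  match @unpickle rat m with
  | Some r => (if (r < x)%O then 1/2 else 0) + (if (r <= x)%O then 1/2 else 0)
  | None => 0
  end.

Definition p (x : rat) : R := Series (fun m => w m * ind m x).
Definition c (r : rat) : R := w (pickle r) / 2.

Lemma w_pos m : 0 < w m.
Proof. unfold w. apply pow_lt. lra. Qed.

Lemma ind_bnd m x : 0 <= ind m x <= 1.
Proof. unfold ind. destruct (unpickle m) as [r|]; [|lra].
destruct (r < x)%O, (r <= x)%O; lra. Qed.

Lemma ind_mono m x y : (x <= y)%O -> ind m x <= ind m y.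
Proof. move=> Hxy. unfold ind. destruct (unpickle m) as [r|]; [|lra].
case E1: (r < x)%O; case E2: (r <= x)%O; case E3: (r < y)%O; case E4: (r <= y)%O; try lra.
all: first [ by rewrite (Order.POrderTheory.lt_le_trans E1 Hxy) in E3
           | by rewrite (Order.POrderTheory.le_trans E2 Hxy) in E4 ].
Qed.

Lemma ex_w : ex_series w.
Proof.
  have H: ex_series (fun n => (1/2)^n).
  { eexists. apply is_series_geom. rewrite Rabs_pos_eq; lra. }
  have H2 := ex_series_scal_l (1/2) _ H.
  eapply ex_series_ext; last exact H2.
  intro n. unfold w. simpl. reflexivity.
Qed.

Lemma ex_wi x : ex_series (fun m => w m * ind m x).
Proof.
  apply: (ex_series_le _ w); last exact ex_w.
  intro n. rewrite /norm /= /abs /=. have := w_pos n. have := ind_bnd n x.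
  move=> H1 H2. rewrite Rabs_pos_eq; nra.
Qed.

Lemma Series_zero : Series (fun _ => 0) = 0.
Proof. transitivity (Series (fun n => 0 * w n)). apply Series_ext => k; ring.
rewrite Series_scal_l; ring. Qed.

Lemma Series_ge_term n : forall a : nat -> R, (forall m, 0 <= a m) -> ex_series a -> a n <= Series a.
Proof.
  induction n as [|n IH]; intros a Ha Hex.
  - rewrite (Series_incr_1 a Hex).
    have: 0 <= Series (fun k => a k.+1).
    { rewrite -Series_zero. apply Series_le; last exact: (proj1 (ex_series_incr_1 a) Hex).
      move=> k. split; [lra| apply Ha]. }
    lra.
  - rewrite (Series_incr_1 a Hex).
    have := IH (fun k => a k.+1) (fun m => Ha m.+1) (proj1 (ex_series_incr_1 a) Hex).
    have := Ha O.
    simpl. lra.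
Qed.

Lemma p_01 x : 0 <= p x <= 1.
Proof.
  split.
  - rewrite -Series_zero. apply Series_le; last exact: ex_wi.
    move=> k. have := w_pos k. have := ind_bnd k x. nra.
  - have ->: 1 = Series w.
    { have H: is_series (fun n => (1/2)^n) (/ (1 - 1/2)).
      { apply is_series_geom. rewrite Rabs_pos_eq; lra. }
      transitivity (Series (fun n => 1/2 * (1/2)^n)).
      + rewrite Series_scal_l (is_series_unique _ _ H). field.
      + apply Series_ext => k. reflexivity. }
    apply Series_le; last exact: ex_w.
    move=> k. have := w_pos k. have := ind_bnd k x. nra.
Qed.

Lemma c_pos r : 0 < c r.
Proof. unfold c. have := w_pos (pickle r). lra. Qed.

Lemma ind_self r : ind (pickle r) r = 1/2.
Proof. rewrite /ind pickleK Order.POrderTheory.ltxx Order.POrderTheory.lexx. lra. Qed.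

Lemma p_ge_c r : c r <= p r.
Proof.
  have := Series_ge_term (pickle r) (fun m => w m * ind m r).
  rewrite ind_self /c. move=> H. have: w (pickle r) * (1 / 2) <= p r.
  { apply H; last exact: ex_wi. move=> k. have := w_pos k. have := ind_bnd k r. nra. }
  lra.
Qed.

Lemma p_lt s r : (s < r)%O -> p s + c r <= p r.
Proof.
  move=> Hsr.
  have E: p r - p s = Series (fun m => w m * ind m r - w m * ind m s).
  { rewrite Series_minus //; exact: ex_wi. }
  have H := Series_ge_term (pickle r) (fun m => w m * ind m r - w m * ind m s).
  have Hs : ind (pickle r) s = 0.
  { rewrite /ind pickleK. rewrite (Order.POrderTheory.lt_gtF Hsr).
    rewrite (Order.POrderTheory.lt_geF Hsr). lra. }
  rewrite ind_self Hs /= in H.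
  have : w (pickle r) * (1 / 2) - w (pickle r) * 0 <= p r - p s.
  { rewrite E. apply H; last first.
    { apply: ex_series_minus; exact: ex_wi. }
    move=> k. have := w_pos k. have := ind_mono k s r (Order.POrderTheory.ltW Hsr). nra. }
  rewrite /c. lra.
Qed.

Lemma p_gt s r : (r < s)%O -> p r + c r <= p s.
Proof.
  move=> Hsr.
  have E: p s - p r = Series (fun m => w m * ind m s - w m * ind m r).
  { rewrite Series_minus //; exact: ex_wi. }
  have H := Series_ge_term (pickle r) (fun m => w m * ind m s - w m * ind m r).
  have Hs : ind (pickle r) s = 1.
  { rewrite /ind pickleK Hsr (Order.POrderTheory.ltW Hsr). lra. }
  rewrite ind_self Hs /= in H.
  have : w (pickle r) * 1 - w (pickle r) * (1/2) <= p s - p r.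
  { rewrite E. apply H; last first.
    { apply: ex_series_minus; exact: ex_wi. }
    move=> k. have := w_pos k. have := ind_mono k r s (Order.POrderTheory.ltW Hsr). nra. }
  rewrite /c. lra.
Qed.

Definition z0 : rat := @GRing.zero _.
Definition o1 : rat := @GRing.one _.
Definition q01 (q : rat) : Prop := (z0 <= q)%O /\ (q <= o1)%O.

Lemma p_inj s r : p s = p r -> s = r.
Proof.
  move=> E. case: (ltgtP s r) => // H.
  - have := p_lt s r H. have := c_pos r. lra.
  - have := p_gt s r H. have := c_pos r. lra.
Qed.

Lemma p_le s r : (s <= r)%O -> p s <= p r.
Proof.
  rewrite le_eqVlt => /orP [/eqP -> | H]; first lra.
  have := p_lt s r H. have := c_pos r. lra.
Qed.

Definition Y (u : rat) (n : nat) : R := p u - c u / (2 * (INR n + 2)).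

Lemma Y_bnd u n : p u - c u / 2 < Y u n < p u.
Proof.
  rewrite /Y. have Hc := c_pos u. have Hn := pos_INR n.
  set d := INR n + 2.
  set t := c u / (2 * d).
  have Ht : t * (2 * d) = c u by rewrite /t; field; rewrite /d; lra.
  rewrite /d in Ht. nra.
Qed.

Lemma Y_small u n eps : 0 < eps -> c u / eps < INR n -> p u - Y u n < eps.
Proof.
  move=> He Hn. rewrite /Y. have Hc := c_pos u. have Hn0 := pos_INR n.
  set t := c u / (2 * (INR n + 2)).
  have Ht : t * (2 * (INR n + 2)) = c u by rewrite /t; field; lra.
  have Hc' : c u < INR n * eps.
  { have: c u / eps * eps = c u by field; lra. nra. }
  nra.
Qed.

Definition Ppt x := exists q, q01 q /\ x = p q.
Definition zpt x (un : rat * nat) := ((z0 < un.1)%O /\ (un.1 <= o1)%O) /\ x = Y un.1 un.2.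

Definition fz (un : rat * nat) : R :=
  match @unpickle (rat * nat)%type un.2 with
  | Some (q, _) => if ((z0 <= q)%O && (q < un.1)%O) then p q else p z0
  | None => p z0
  end.

Definition f (x : R) : R :=
  match excluded_middle_informative (Ppt x) with
  | left _ => x
  | right _ =>
    match excluded_middle_informative (exists un, zpt x un) with
    | left H => fz (proj1_sig (constructive_indefinite_description _ H))
    | right _ => p z0
    end
  end.

Lemma f_cases x :
  (Ppt x /\ f x = x) \/
  (~ Ppt x /\ exists un, zpt x un /\ f x = fz un) \/
  (~ Ppt x /\ ~ (exists un, zpt x un) /\ f x = p z0).
Proof.
  rewrite /f. case: (excluded_middle_informative (Ppt x)) => HP; first by left.
  case: (excluded_middle_informative (exists un, zpt x un)) => HZ.
  - right; left. split => //. case: (constructive_indefinite_description _ HZ) => un Hun /=.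
    by exists un.
  - by right; right.
Qed.

Lemma zone_not_P x un : zpt x un -> ~ Ppt x.
Proof.
  case: un => u n [[Hu0 Hu1] /= ->] [q [_ E]].
  have := Y_bnd u n. rewrite E. case: (ltgtP q u) => H.
  - have := p_lt q u H. have := c_pos u. lra.
  - have := p_gt q u H. lra.
  - subst. lra.
Qed.

Lemma zpt_uniq x un un' : zpt x un -> zpt x un' -> un = un'.
Proof.
  case: un => u n; case: un' => u' n' [[Hu0 Hu1] /= E1] [[Hu0' Hu1'] /= E2].
  rewrite E1 in E2.
  have Hb := Y_bnd u n. have Hb' := Y_bnd u' n'.
  case: (ltgtP u u') => H.
  - have := p_lt u u' H. have := c_pos u'. lra.
  - have := p_lt u' u H. have := c_pos u. lra.
  - subst u'. f_equal. rewrite /Y in E2. have Hc := c_pos u.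
    have Hn := pos_INR n. have Hn' := pos_INR n'.
    have: INR n = INR n'.
    { have E3 : c u / (2 * (INR n + 2)) = c u / (2 * (INR n' + 2)) by lra.
      have E4 : (INR n + 2) * (c u / (2 * (INR n + 2))) = c u / 2 by field; lra.
      have E5 : (INR n' + 2) * (c u / (2 * (INR n' + 2))) = c u / 2 by field; lra.
      rewrite -E3 in E5.
      set t := c u / (2 * (INR n + 2)) in E4 E5.
      have Ht : 0 < t by rewrite /t; apply Rdiv_lt_0_compat; lra.
      nra. }
    apply INR_eq.
Qed.

Lemma fz_ge un : p z0 <= fz un.
Proof.
  rewrite /fz. case: (unpickle un.2) => [[q m]|]; last lra.
  case: ifP => [/andP [H _]|_]; last lra. exact: p_le.
Qed.

Lemma fz_le u n : (z0 < u)%O -> fz (u, n) <= p u - c u.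
Proof.
  move=> Hu. rewrite /fz /=. case: (unpickle n) => [[q m]|].
  - case: ifP => [/andP [_ H]|_].
    + have := p_lt q u H. lra.
    + have := p_lt z0 u Hu. lra.
  - have := p_lt z0 u Hu. lra.
Qed.

Lemma f_ge x : p z0 <= f x.
Proof.
  case: (f_cases x) => [[[q [[Hq _] E]] ->]|[[_ [un [_ ->]]]|[_ [_ ->]]]].
  - rewrite E. exact: p_le.
  - exact: fz_ge.
  - lra.
Qed.

Lemma abs_lt a b eps : Rabs (a - b) < eps -> b < a + eps /\ a - eps < b.
Proof. move=> H. have := Rabs_def2 _ _ H. lra. Qed.

Section Trap.
Variables (S : rat -> Prop) (M dl : R).
Hypotheses (S0 : S z0)
  (Sdown : forall s t, (z0 <= s)%O -> (s < t)%O -> S t -> S s)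
  (H1 : forall s, q01 s -> S s -> p s <= M)
  (H2 : forall s, q01 s -> ~ S s -> M + dl <= p s)
  (H3 : forall u, (z0 < u)%O -> (u <= o1)%O -> ~ S u -> M + dl/2 <= p u - c u / 2)
  (Hdl : 0 < dl).

Lemma key y : y < M + dl/2 -> f y <= M.
Proof.
  move=> Hy.
  have Hz01 : q01 z0 by split; rewrite ?lexx //.
  case: (f_cases y) => [[[q [Hq E]] ->]|[[_ [[u n] [Hz ->]]]|[_ [_ ->]]]].
  - case: (classic (S q)) => HS.
    + rewrite E. exact: H1.
    + have := H2 q Hq HS. lra.
  - case: Hz => [[Hu0 Hu1] /= Ey].
    have Hb := Y_bnd u n.
    case: (classic (S u)) => HS; last first.
    { have := H3 u Hu0 Hu1 HS. lra. }
    rewrite /fz /=. case: (unpickle n) => [[q m]|]; last exact: H1.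
    case: ifP => [/andP [Hq0 Hqu]|_]; last exact: H1.
    apply: H1; last exact: (Sdown q u).
    split => //. apply: le_trans (ltW Hqu) Hu1.
  - exact: H1.
Qed.

Lemma trap eps x y : 0 < eps -> eps <= dl/2 -> eps_chain f eps x y -> f x <= M -> y < M + dl/2.
Proof.
  move=> He Hle [n [s [Hn [E0 [En [Hin Hst]]]]]] Hfx.
  have Hall : forall i : nat, leq i n -> f (s i) <= M.
  { elim=> [|i IH] Hi; first by rewrite E0.
    have Hi' : leq i.+1 n by exact: Hi.
    have := abs_lt _ _ _ (Hst i Hi'). have := IH (ltnW Hi'). move=> Hf [Ha _].
    apply: key. lra. }
  case: n Hn En Hin Hst Hall => [//|k] _ En _ Hst Hall.
  rewrite -En. have := abs_lt _ _ _ (Hst k (ltnSn k)). have := Hall k (leqnSn k). lra.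
Qed.

End Trap.

Lemma lower eps x y : 0 < eps -> eps_chain f eps x y -> p z0 - eps < y.
Proof.
  move=> He [n [s [Hn [E0 [En [Hin Hst]]]]]].
  case: n Hn En Hin Hst => [//|k] _ En _ Hst.
  rewrite -En. have := abs_lt _ _ _ (Hst k (ltnSn k)). have := f_ge (s k). lra.
Qed.

Lemma notlt_le (a b : rat) : ~ (a < b)%O -> (b <= a)%O.
Proof. move=> H. rewrite leNgt. by apply/negP. Qed.
Lemma notle_lt (a b : rat) : ~ (a <= b)%O -> (b < a)%O.
Proof. move=> H. rewrite ltNge. by apply/negP. Qed.

Lemma inj_unbounded (h : nat -> nat) : injective h -> forall N, exists m, leq N (h m).
Proof.
  move=> Hh N. apply: NNPP => Hno.
  have Hlt : forall m, leq (h m).+1 N.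
  { move=> m. rewrite ltnNge. apply/negP => HN. apply: Hno. by exists m. }
  have U : uniq (map h (seq.iota O N.+1)) by rewrite map_inj_uniq // iota_uniq.
  have Sub : {subset map h (seq.iota O N.+1) <= seq.iota O N}.
  { move=> x /mapP [m _ ->]. rewrite mem_iota /=. exact: Hlt. }
  have := uniq_leq_size U Sub. rewrite size_map !size_iota. by rewrite ltnn.
Qed.

Lemma p_in01 q : I01 (p q).
Proof. exact: p_01. Qed.

Lemma CR_P x : Ppt x -> CR f x.
Proof.
  move=> [q [Hq E]].
  have Hx : I01 x by rewrite E; exact: p_in01.
  have Hf : f x = x.
  { case: (f_cases x) => [[_ ->]//|[[HP _]|[HP _]]]; exfalso; apply: HP; by exists q. }
  split; [exact Hx|split; [exact Hx|]] => eps He.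
  exists 1%nat, (fun _ => x). split; first by []. split; first by []. split; first by [].
  split; first by move=> i _.
  move=> i _. rewrite Hf Rminus_diag Rabs_R0. exact He.
Qed.

Lemma q01_z0 : q01 z0.
Proof. split; rewrite ?lexx //. Qed.

Lemma nonP_notCR x : ~ Ppt x -> ~ CR f x.
Proof.
  move=> HP [Hx [_ HC]].
  case: (f_cases x) => [[HP' _]//|[[_ [[u n] [Hz Hf]]]|[_ [HZ Hf]]]].
  - case: Hz => [[Hu0 Hu1] /= Ex].
    have Hfx := fz_le u n Hu0. rewrite -Hf in Hfx.
    have Hcu := c_pos u.
    have Hch := HC (c u / 2) ltac:(lra).
    have := trap (fun s => (s < u)%O) (p u - c u) (c u) Hu0
      ltac:(move=> s t _ Hst Htu; exact: lt_trans Hst Htu)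
      ltac:(move=> s _ Hsu; have := p_lt s u Hsu; lra)
      ltac:(move=> s _ Hsu; move/notlt_le in Hsu; have := p_le u s Hsu; lra)
      ltac:(move=> u' _ _ Hu'; move/notlt_le in Hu'; rewrite le_eqVlt in Hu';
            case/orP: Hu' => [/eqP ->|Hu']; [lra|];
            have := p_gt u' u Hu'; have := p_lt u u' Hu'; have := c_pos u'; lra)
      (c u / 2) x x ltac:(lra) ltac:(lra) Hch Hfx.
    have := Y_bnd u n. rewrite -Ex. lra.
  - have Hne : x <> p z0.
    { move=> E. apply: HP. exists z0. split; [exact: q01_z0|exact: E]. }
    have Hc0 := c_pos z0.
    case: (Rlt_or_le x (p z0)) => Hlt.
    + have := lower (p z0 - x) x x ltac:(lra) (HC (p z0 - x) ltac:(lra)). lra.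
    + set dl := Rmin (c z0) (2 * (x - p z0)).
      have Hdl : 0 < dl by rewrite /dl; apply Rmin_glb_lt; lra.
      have Hdl1 : dl <= c z0 by apply Rmin_l.
      have Hdl2 : dl <= 2 * (x - p z0) by apply Rmin_r.
      have := trap (fun s => (s <= z0)%O) (p z0) dl (lexx z0)
        ltac:(move=> s t _ Hst Htu; exact: ltW (lt_le_trans Hst Htu))
        ltac:(move=> s _ Hsu; exact: p_le)
        ltac:(move=> s _ Hsu; move/notle_lt in Hsu; have := p_gt s z0 Hsu; lra)
        ltac:(move=> u' Hu0 _ _;
              have := p_gt u' z0 Hu0; have := p_lt z0 u' Hu0; have := c_pos u'; lra)
        (dl / 2) x x ltac:(lra) ltac:(lra) (HC (dl/2) ltac:(lra)) ltac:(lra).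
      lra.
Qed.

Lemma CR_iff x : CR f x <-> Ppt x.
Proof.
  split; last exact: CR_P.
  move=> H. apply: NNPP => HP. exact: nonP_notCR HP H.
Qed.

Lemma f_Y b n : (z0 < b)%O -> (b <= o1)%O -> f (Y b n) = fz (b, n).
Proof.
  move=> Hb0 Hb1.
  have Hz : zpt (Y b n) (b, n) by split.
  case: (f_cases (Y b n)) => [[HP _]|[[_ [un [Hun ->]]]|[_ [HZ _]]]].
  - exfalso. exact: zone_not_P Hz HP.
  - by rewrite (zpt_uniq _ _ _ Hun Hz).
  - exfalso. apply: HZ. by exists (b, n).
Qed.

Lemma order a b : q01 a -> q01 b -> (chain_rel f (p b) (p a) <-> (a <= b)%O).
Proof.
  move=> Ha Hb. split.
  - move=> [_ [_ HC]]. rewrite leNgt. apply/negP => Hba.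
    have Hcb := c_pos b.
    have Hf : f (p b) = p b.
    { case: (f_cases (p b)) => [[_ ->]//|[[HP _]|[HP _]]]; exfalso; apply: HP; by exists b. }
    have := trap (fun s => (s <= b)%O) (p b) (c b) (proj1 Hb)
      ltac:(move=> s t _ Hst Htu; exact: ltW (lt_le_trans Hst Htu))
      ltac:(move=> s _ Hsu; exact: p_le)
      ltac:(move=> s _ Hsu; move/notle_lt in Hsu; have := p_gt s b Hsu; lra)
      ltac:(move=> u' _ _ Hu'; move/notle_lt in Hu';
            have := p_gt u' b Hu'; have := p_lt b u' Hu'; have := c_pos u'; lra)
      (c b / 2) (p b) (p a) ltac:(lra) ltac:(lra) (HC (c b / 2) ltac:(lra)) ltac:(lra).
    have := p_gt a b Hba. lra.
  - move=> Hab. split; first exact: p_in01. split; first exact: p_in01.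
    move=> eps He.
    rewrite le_eqVlt in Hab. case/orP: Hab => [/eqP ->|Hab].
    { have [_ [_ H]] := CR_P (p b) (ex_intro _ b (conj Hb erefl)). exact: H. }
    have Hb0 : (z0 < b)%O by exact: le_lt_trans (proj1 Ha) Hab.
    have [N HN] := INR_unbounded (c b / eps).
    have Hinj : injective (fun m : nat => pickle (a, m)).
    { move=> m1 m2 H. have := f_equal (@unpickle (rat * nat)%type) H. rewrite !pickleK. by case. }
    have [m Hm] := inj_unbounded _ Hinj N.
    set n := pickle (a, m).
    have HnN : INR N <= INR n by apply le_INR; apply/ssrnat.leP.
    have Hfz : fz (b, n) = p a.
    { rewrite /fz /= /n pickleK /= (proj1 Ha) Hab. done. }
    have Hyb := Y_bnd b n. have Hys := Y_small b n eps He ltac:(lra).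
    have Hpb := p_ge_c b. have Hcb := c_pos b. have := p_01 b. move=> Hp01.
    exists 2%nat, (fun i => match i with 0%nat => p b | 1%nat => Y b n | _ => p a end).
    split; first by []. split; first by []. split; first by [].
    split.
    + move=> [|[|i]] _ /=; [exact: p_in01| |exact: p_in01]. split; lra.
    + move=> [|[|i]] Hi /=.
      * have Hf : f (p b) = p b.
        { case: (f_cases (p b)) => [[_ ->]//|[[HP _]|[HP _]]]; exfalso; apply: HP; by exists b. }
        rewrite Hf Rabs_pos_eq; lra.
      * rewrite f_Y // ?Hfz ?Rminus_diag ?Rabs_R0 //; last exact: (proj2 Hb).
      * done.
Qed.

Definition g (x : R) : rat :=
  match excluded_middle_informative (Ppt x) with
  | left H => proj1_sig (constructive_indefinite_description _ H)
  | right _ => z0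
  end.

Lemma g_spec x : Ppt x -> q01 (g x) /\ x = p (g x).
Proof.
  rewrite /g => H. case: (excluded_middle_informative (Ppt x)) => [H'|//].
  by case: (constructive_indefinite_description _ H') => q [Hq E] /=.
Qed.

Lemma g_p q : q01 q -> g (p q) = q.
Proof.
  move=> Hq. have [_ E] := g_spec (p q) (ex_intro _ q (conj Hq erefl)).
  symmetry. exact: p_inj E.
Qed.

Lemma fz_01 un : I01 (fz un).
Proof. rewrite /fz. case: (unpickle un.2) => [[q m]|]; last exact: p_in01.
case: ifP => _; exact: p_in01. Qed.

Theorem theorem3p1 :
  exists f : R -> R, self_map01 f /\ chain_components_iso_Q01 f.
Proof.
  exists f. split.
  { move=> x Hx. case: (f_cases x) => [[_ ->]//|[[_ [un [_ ->]]]|[_ [_ ->]]]].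
    - exact: fz_01.
    - exact: p_in01. }
  exists g. split; [|split; [|split]].
  - move=> x /CR_iff /g_spec [[H0 H1] _]. by split.
  - move=> x y /CR_iff Hx /CR_iff Hy.
    have [Hgx Ex] := g_spec x Hx. have [Hgy Ey] := g_spec y Hy.
    move: (g x) (g y) Hgx Hgy Ex Ey => a b Ha Hb -> ->.
    rewrite /chainE !order //. split.
    + move=> [H1 H2]. apply/eqP. by rewrite eq_le H1 H2.
    + move=> ->. by rewrite lexx.
  - move=> q H0 H1. have Hq : q01 q by split.
    exists (p q). split; first by apply/CR_iff; exists q.
    exact: g_p.
  - move=> x y /CR_iff Hx /CR_iff Hy.
    have [Hgx Ex] := g_spec x Hx. have [Hgy Ey] := g_spec y Hy.
    move: (g x) (g y) Hgx Hgy Ex Ey => a b Ha Hb -> ->.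
    exact: order.
Qed.
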